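(* Let $\kappa$ be an uncountable regular cardinal and let $\mathcal{I}$ be a $\kappa$-complete proper ideal on $\kappa$ containing every bounded subset of $\kappa$, and suppose $\mathcal{I}$ contains an unbounded subset of $\kappa$. Let $\nu\in\{2,\kappa\}$. Then the class of $\mathcal{I}$-analytic subsets of ${}^{\kappa}\nu$ is closed under unions of at most $2^\kappa$ sets.
   Context: Work in ZFC. For $\mu\in\{2,\kappa\}$, ${}^{\kappa}\mu$ is the set of functions $\kappa\to\mu$. For $f\colon D\to\mu$ with $D\in\mathcal{I}$ let $\mathbf{N}_f=\{x\in{}^{\kappa}\mu: f\subseteq x\}$; the $\mathcal{I}$-topology $\tau_{\mathcal{I}}$ on ${}^{\kappa}\mu$ is generated by these sets. A function ${}^{\kappa}\kappa\to{}^{\kappa}\nu$ is $\mathcal{I}$-continuous if it is continuous when both spaces carry $\tau_{\mathcal{I}}$. A set $A\subseteq{}^{\kappa}\nu$ is $\mathcal{I}$-analytic if either $A=\emptyset$ or there are a $\tau_{\mathcal{I}}$-closed set $C\subseteq{}^{\kappa}\kappa$ and an $\mathcal{I}$-continuous function $\Phi\colon{}^{\kappa}\kappa\to{}^{\kappa}\nu$ with $\Phi(C)=A$. *)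

(* Defs.v *)
Set Implicit Arguments.

Definition card_le (A B : Type) : Prop := exists f : A -> B, forall x y, f x = f y -> x = y.
Definition card_lt (A B : Type) : Prop := card_le A B /\ ~ card_le B A.

(* kappa is represented by a type T carrying a strict well-order lt of order type kappa. *)
Definition strict_wellorder (T : Type) (lt : T -> T -> Prop) : Prop :=
  (forall x, ~ lt x x) /\
  (forall x y z, lt x y -> lt y z -> lt x z) /\
  (forall x y, lt x y \/ x = y \/ lt y x) /\
  well_founded lt.

(* The order type is a cardinal (initial ordinal): every proper initial segment is smaller. *)
Definition is_initial (T : Type) (lt : T -> T -> Prop) : Prop :=
  forall a : T, card_lt {b : T | lt b a} T.

Definition bounded (T : Type) (lt : T -> T -> Prop) (S : T -> Prop) : Prop :=
  exists a, forall b, S b -> lt b a.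

Definition is_regular (T : Type) (lt : T -> T -> Prop) : Prop :=
  forall S : T -> Prop, card_lt {b : T | S b} T -> bounded lt S.

Definition uncountable (T : Type) : Prop := ~ card_le T nat.

Definition is_ideal (T : Type) (I : (T -> Prop) -> Prop) : Prop :=
  I (fun _ => False) /\
  (forall S S' : T -> Prop, I S -> (forall a, S' a -> S a) -> I S') /\
  (forall S S' : T -> Prop, I S -> I S' -> I (fun a => S a \/ S' a)).

Definition kappa_complete (T : Type) (I : (T -> Prop) -> Prop) : Prop :=
  forall (J : Type) (F : J -> T -> Prop), card_lt J T ->
    (forall j, I (F j)) -> I (fun a => exists j, F j a).

Definition proper_ideal (T : Type) (I : (T -> Prop) -> Prop) : Prop :=
  ~ I (fun _ => True).

(* The I-topology on T -> V: generated by the sets N_f = {x | f ⊆ x}, f : D -> V, D ∈ I. *)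
Definition I_open (T V : Type) (I : (T -> Prop) -> Prop) (U : (T -> V) -> Prop) : Prop :=
  forall x, U x -> exists D : T -> Prop, I D /\
    (forall y : T -> V, (forall a, D a -> y a = x a) -> U y).

Definition I_closed (T V : Type) (I : (T -> Prop) -> Prop) (C : (T -> V) -> Prop) : Prop :=
  I_open I (fun x => ~ C x).

Definition I_continuous (T V : Type) (I : (T -> Prop) -> Prop)
  (Phi : (T -> T) -> (T -> V)) : Prop :=
  forall U : (T -> V) -> Prop, I_open I U -> I_open I (fun x => U (Phi x)).

Definition I_analytic (T V : Type) (I : (T -> Prop) -> Prop) (A : (T -> V) -> Prop) : Prop :=
  (forall y, ~ A y) \/
  exists (C : (T -> T) -> Prop) (Phi : (T -> T) -> (T -> V)),
    I_closed I C /\ I_continuous I Phi /\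
    (forall y, A y <-> exists x, C x /\ Phi x = y).

(* Closure of the I-analytic subsets of T -> V under unions of at most 2^kappa sets
   (2^kappa = |T -> bool|). *)
Definition analytic_union_closed (T V : Type) (I : (T -> Prop) -> Prop) : Prop :=
  forall (J : Type) (A : J -> (T -> V) -> Prop), card_le J (T -> bool) ->
    (forall j, I_analytic I (A j)) -> I_analytic I (fun y => exists j, A j y).

(* Main.v *)
Require Import Defs.
From Stdlib Require Import Classical ClassicalEpsilon FunctionalExtensionality ProofIrrelevance.

Lemma all_analytic (T V : Type) (I : (T -> Prop) -> Prop) (S : T -> Prop)
  (HS : I S) (h : T -> T) (hS : forall a, S (h a)) (hinj : forall a b, h a = h b -> a = b)
  (q : T -> V) (qsurj : forall v, exists t, q t = v) (A : (T -> V) -> Prop) :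
  I_analytic I A.
Proof.
  destruct (classic (exists y, A y)) as [[a0 Ha0]|Hn]; [right|left].
  2:{ intros y Hy; apply Hn; eauto. }
  pose (conv := fun x : T -> T => fun t => q (x (h t))).
  pose (Phi := fun x => if excluded_middle_informative (A (conv x)) then conv x else a0).
  exists (fun _ => True), Phi. split; [|split].
  - intros x Hx; exfalso; apply Hx; exact Logic.I.
  - intros U _ x Hx. exists S; split; [exact HS|].
    intros y Hy. replace (Phi y) with (Phi x); [exact Hx|].
    unfold Phi. replace (conv y) with (conv x); [reflexivity|].
    unfold conv; apply functional_extensionality; intro t; rewrite Hy; auto.
  - intros y; split.
    + intros Hy.
      pose (z := fun t => proj1_sig (constructive_indefinite_description _ (qsurj (y t)))).
      assert (Hz : forall t, q (z t) = y t).
      { intro t; unfold z; destruct (constructive_indefinite_description _ _); auto. }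
      pose (x := fun b => match excluded_middle_informative (exists a, h a = b) with
                 | left H => z (proj1_sig (constructive_indefinite_description _ H))
                 | right _ => z b end).
      assert (Hx : forall a, x (h a) = z a).
      { intro a; unfold x; destruct (excluded_middle_informative _) as [H|H].
        - destruct (constructive_indefinite_description _ H) as [a' Ha']; simpl.
          apply hinj in Ha'; subst; auto.
        - exfalso; eauto. }
      assert (Hc : conv x = y).
      { apply functional_extensionality; intro t; unfold conv; rewrite Hx; auto. }
      exists x; split; [exact Logic.I|]. unfold Phi; rewrite Hc.
      destruct (excluded_middle_informative (A y)); tauto.
    + intros [x [_ Hx]]; subst y; unfold Phi.
      destruct (excluded_middle_informative (A (conv x))); auto.
Qed.

Theorem theorem5p2 (T : Type) (lt : T -> T -> Prop)
  (Hwo : strict_wellorder lt) (Hcard : is_initial lt)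
  (Hreg : is_regular lt) (Hunc : uncountable T)
  (I : (T -> Prop) -> Prop)
  (Hideal : is_ideal I) (Hcomp : kappa_complete I) (Hprop : proper_ideal I)
  (Hbdd : forall S : T -> Prop, bounded lt S -> I S)
  (Hunb : exists S : T -> Prop, I S /\ ~ bounded lt S) :
  analytic_union_closed bool I /\ analytic_union_closed T I.
Proof.
  destruct Hunb as [S [HS HnS]].
  assert (Hle : card_le T {b : T | S b}).
  { apply NNPP; intro Hn; apply HnS, Hreg; split; [|exact Hn].
    exists (@proj1_sig _ _); intros [a pa] [b pb]; simpl; intros ->.
    f_equal; apply proof_irrelevance. }
  destruct Hle as [f finj].
  pose (h := fun a => proj1_sig (f a)).
  assert (hS : forall a, S (h a)) by (intro a; exact (proj2_sig (f a))).
  assert (hinj : forall a b, h a = h b -> a = b).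
  { intros a b E; apply finj; unfold h in E; revert E.
    generalize (f a) (f b); intros [xa pa] [xb pb]; simpl; intros E.
    subst xb; f_equal; apply proof_irrelevance. }
  assert (Htwo : exists t0 t1 : T, t0 <> t1).
  { apply NNPP; intro Hn; apply Hunc; exists (fun _ => 0); intros x y _.
    apply NNPP; intro Hxy; apply Hn; eauto. }
  destruct Htwo as [t0 [t1 Ht]].
  split; intros J A _ _.
  - apply (@all_analytic T _ I S HS h hS hinj
      (fun t => if excluded_middle_informative (t = t0) then true else false)).
    intros []; [exists t0 | exists t1];
      destruct (excluded_middle_informative _); congruence.
  - apply (@all_analytic T _ I S HS h hS hinj (fun t => t)); eauto.
Qed.
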